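(* Let $q\in(0,1)$ and let $W\in\mathbb{R}^{I\times I}$ be a nonnegative matrix with $W\mathbf{1}=\mathbf{1}$ and $\mathbf{1}^*W=\mathbf{1}^*$. Consider the Synchronous Asymmetric Gossip Algorithm: at each time $t$, every node $i\in I$ independently (of the other nodes and of the past) samples a node $j_i$ with probability $W_{i,j_i}$, and all nodes simultaneously update $x_i(t+1)=(1-q)x_i(t)+qx_{j_i}(t)$. Then for every $t\ge0$, $$\mathbb{E}[(\bar x(t)-\bar x(0))^2]\le\frac{q}{N(1-q)+q}V(x(0)).$$
   Context: $I$ is a finite set of $N$ nodes, $x(0)\in\mathbb{R}^I$ deterministic. $\mathbf{1}$ is the all-ones vector, $W^*$ the transpose. For $y\in\mathbb{R}^I$, $\bar y=\frac1N\sum_i y_i$ and $V(y)=\frac1N\sum_i(y_i-\bar y)^2$. *)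

(* Defs.v *)
From HB Require Import structures.
From mathcomp Require Import all_boot all_order all_algebra.
Set Implicit Arguments. Unset Strict Implicit. Unset Printing Implicit Defensive.
Import Order.TTheory GRing.Theory Num.Theory.
Local Open Scope ring_scope.

Section Gossip.
Variables (R : realFieldType) (I : finType).

Definition avg (y : I -> R) : R := (#|I|%:R)^-1 * \sum_(i : I) y i.

Definition var (y : I -> R) : R :=
  (#|I|%:R)^-1 * \sum_(i : I) (y i - avg y) ^+ 2.

Definition sag_step (q : R) (j : {ffun I -> I}) (x : I -> R) : I -> R :=
  fun i => (1 - q) * x i + q * x (j i).

(* probability of the joint choice j at one time step: nodes choose
   independently, node i picks j i with probability W i (j i) *)
Definition choice_prob (W : I -> I -> R) (j : {ffun I -> I}) : R :=
  \prod_(i : I) W i (j i).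

(* sag_expect W q t x F = E[F(x(t))] when x(0) = x, the choices at the
   different times being independent (Markov chain, expectation computed
   by conditioning on the first step). *)
Fixpoint sag_expect (W : I -> I -> R) (q : R) (t : nat) (x : I -> R)
    (F : (I -> R) -> R) : R :=
  match t with
  | O => F x
  | S t' => \sum_(j : {ffun I -> I}) choice_prob W j *
              sag_expect W q t' (sag_step q j x) F
  end.

End Gossip.

(* Main.v *)
Require Import Defs.
From HB Require Import structures.
From mathcomp Require Import all_boot all_order all_algebra.
From mathcomp Require Import ring lra.
Import Order.TTheory GRing.Theory Num.Theory.
Local Open Scope ring_scope.

Section Helpers.
Variables (R : realFieldType) (I : finType) (W : I -> I -> R).
Hypothesis hWnn : forall i j, 0 <= W i j.
Hypothesis hWrow : forall i, \sum_(j : I) W i j = 1.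
Hypothesis hWcol : forall j, \sum_(i : I) W i j = 1.

Lemma master (g : I -> I -> R) :
  \sum_(j : {ffun I -> I}) choice_prob W j * \prod_(i : I) g i (j i)
  = \prod_(i : I) \sum_(a : I) W i a * g i a.
Proof.
rewrite bigA_distr_bigA /=; apply: eq_bigr => j _.
by rewrite /choice_prob -big_split.
Qed.

Lemma prod_if1 (k : I) (h : I -> R) :
  \prod_(i : I) (if i == k then h i else 1) = h k.
Proof.
rewrite (bigD1 k) //= eqxx big1 ?mulr1 // => i /negbTE -> //.
Qed.

Lemma E1 : \sum_(j : {ffun I -> I}) choice_prob W j = 1.
Proof.
transitivity (\sum_(j : {ffun I -> I}) choice_prob W j *
   \prod_(i : I) (fun _ _ => 1 : R) i (j i)).
  by apply: eq_bigr => j _; rewrite big1_eq mulr1.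
rewrite (master (fun _ _ => 1)) big1 // => i _.
rewrite -[RHS](hWrow i); apply: eq_bigr => a _; by rewrite mulr1.
Qed.

Lemma E2 (k : I) (f : I -> R) :
  \sum_(j : {ffun I -> I}) choice_prob W j * f (j k) = \sum_(a : I) W k a * f a.
Proof.
transitivity (\sum_(j : {ffun I -> I}) choice_prob W j *
   \prod_(i : I) (fun i a => if i == k then f a else 1) i (j i)).
  by apply: eq_bigr => j _; rewrite (prod_if1 k (fun i => f (j i))).
rewrite (master (fun i a => if i == k then f a else 1)) (bigD1 k) //= eqxx [\prod_(i | _) _]big1 ?mulr1 // => i /negbTE ik.
rewrite -[RHS](hWrow i); apply: eq_bigr => a _; by rewrite ik mulr1.
Qed.

Lemma E3 (k l : I) (f h : I -> R) : k != l ->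
  \sum_(j : {ffun I -> I}) choice_prob W j * (f (j k) * h (j l))
  = (\sum_(a : I) W k a * f a) * (\sum_(a : I) W l a * h a).
Proof.
move=> kl.
transitivity (\sum_(j : {ffun I -> I}) choice_prob W j *
   \prod_(i : I) (fun i a => (if i == k then f a else 1) * (if i == l then h a else 1)) i (j i)).
  apply: eq_bigr => j _; rewrite big_split /=.
  by rewrite (prod_if1 k (fun i => f (j i))) (prod_if1 l (fun i => h (j i))).
rewrite (master (fun i a => (if i == k then f a else 1) * (if i == l then h a else 1))) (bigD1 k) //= [\prod_(i | _) _](bigD1 l) /=; last by rewrite eq_sym.
rewrite !eqxx (negbTE kl) (eq_sym l k) (negbTE kl).
rewrite [\prod_(i | _) _]big1 ?mulr1; last first.
  move=> i /andP[ik il]; rewrite -[RHS](hWrow i); apply: eq_bigr => a _.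
  by rewrite (negbTE ik) (negbTE il) !mulr1.
congr (_ * _); apply: eq_bigr => a _; by rewrite ?mulr1 ?mul1r.
Qed.

Lemma p_ge0 j : 0 <= choice_prob W j.
Proof. by apply: prodr_ge0 => i _. Qed.


Variable q : R.
Variable w : I -> R.
Let wp (j : {ffun I -> I}) i := (1 - q) * w i + q * w (j i).
Let u i := \sum_(a : I) W i a * ((1 - q) * w i + q * w a).
Let T i := \sum_(a : I) W i a * ((1 - q) * w i + q * w a) ^+ 2.

Lemma ES2 : \sum_(j : {ffun I -> I}) choice_prob W j * \sum_(i : I) (wp j i) ^+ 2
  = \sum_(i : I) T i.
Proof.
under eq_bigr do rewrite mulr_sumr.
rewrite exchange_big /=; apply: eq_bigr => i _.
exact: (E2 i (fun a => ((1 - q) * w i + q * w a) ^+ 2)).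
Qed.

Lemma ES1 : \sum_(j : {ffun I -> I}) choice_prob W j * (\sum_(i : I) wp j i) ^+ 2
  = (\sum_(i : I) u i) ^+ 2 + \sum_(i : I) (T i - u i ^+ 2).
Proof.
transitivity (\sum_(k : I) \sum_(l : I) \sum_(j : {ffun I -> I})
   choice_prob W j * (wp j k * wp j l)).
  symmetry; under eq_bigr do rewrite exchange_big.
  rewrite exchange_big; apply: eq_bigr => j _ /=.
  rewrite expr2 mulr_suml mulr_sumr; apply: eq_bigr => k _.
  rewrite mulr_sumr mulr_sumr; apply: eq_bigr => l _; done.
rewrite expr2 mulr_suml -big_split /=; apply: eq_bigr => k _.
rewrite (bigD1 k) //= [in RHS](bigD1 k) //=.
have -> : \sum_(j : {ffun I -> I}) choice_prob W j * (wp j k * wp j k) = T k.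
  rewrite /T -(E2 k (fun a => ((1 - q) * w k + q * w a) ^+ 2)).
  by apply: eq_bigr => j _; rewrite expr2.
have -> : \sum_(l | l != k) \sum_(j : {ffun I -> I}) choice_prob W j * (wp j k * wp j l)
   = \sum_(l | l != k) u k * u l.
  apply: eq_bigr => l lk.
  rewrite /u -(E3 k l (fun a => (1 - q) * w k + q * w a) (fun a => (1 - q) * w l + q * w a));
    last by rewrite eq_sym.
  done.
rewrite -mulr_sumr; ring.
Qed.


Lemma lin3 (a b c : R) (X Y Z : I -> R) :
  \sum_(i : I) (a * X i + b * Y i + c * Z i)
  = a * \sum_(i : I) X i + b * \sum_(i : I) Y i + c * \sum_(i : I) Z i.
Proof. by rewrite !big_split /= -!mulr_sumr. Qed.

Let z i := \sum_(a : I) W i a * w a.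
Let Y i := \sum_(a : I) W i a * w a ^+ 2.

Lemma u_eq i : u i = (1 - q) * w i + q * z i.
Proof.
rewrite /u (eq_bigr (fun a => (1 - q) * w i * W i a + q * (W i a * w a))); last first.
  by move=> a _; ring.
by rewrite big_split /= -!mulr_sumr hWrow mulr1.
Qed.

Lemma T_eq i : T i = (1 - q) ^+ 2 * w i ^+ 2 + 2 * q * (1 - q) * (w i * z i) + q ^+ 2 * Y i.
Proof.
rewrite /T (eq_bigr (fun a => (1 - q) ^+ 2 * w i ^+ 2 * W i a
    + 2 * q * (1 - q) * w i * (W i a * w a) + q ^+ 2 * (W i a * w a ^+ 2))); last first.
  by move=> a _; ring.
rewrite !big_split /= -!mulr_sumr hWrow /z /Y; ring.
Qed.

Lemma sum_col (g : I -> R) : \sum_(i : I) \sum_(a : I) W i a * g a = \sum_(a : I) g a.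
Proof.
rewrite exchange_big /=; apply: eq_bigr => a _.
by rewrite -mulr_suml hWcol mul1r.
Qed.

Lemma step_main (n al : R) : 0 < n -> 0 < q -> q < 1 -> al = q / (n * (1 - q) + q) ->
  (1 - al) * n^-2 * (\sum_(j : {ffun I -> I}) choice_prob W j * (\sum_(i : I) wp j i) ^+ 2)
  + al * n^-1 * (\sum_(j : {ffun I -> I}) choice_prob W j * \sum_(i : I) (wp j i) ^+ 2)
  <= (1 - al) * n^-2 * (\sum_(i : I) w i) ^+ 2 + al * n^-1 * \sum_(i : I) w i ^+ 2.
Proof.
move=> n0 q0 q1 hal.
rewrite ES1 ES2.
have Hu : \sum_(i : I) u i = \sum_(i : I) w i.
  under eq_bigr do rewrite u_eq.
  rewrite big_split /= -!mulr_sumr sum_col; ring.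
have HT : \sum_(i : I) T i = (1 - q) ^+ 2 * \sum_(i : I) w i ^+ 2
     + 2 * q * (1 - q) * \sum_(i : I) (w i * z i) + q ^+ 2 * \sum_(i : I) w i ^+ 2.
  under eq_bigr do rewrite T_eq.
  by rewrite lin3 sum_col.
have HTu : \sum_(i : I) (T i - u i ^+ 2) = q ^+ 2 * \sum_(i : I) w i ^+ 2
     - q ^+ 2 * \sum_(i : I) z i ^+ 2.
  rewrite (eq_bigr (fun i => q ^+ 2 * Y i + (- q ^+ 2) * z i ^+ 2 + 0 * w i)); last first.
    by move=> i _; rewrite T_eq u_eq; ring.
  rewrite lin3 sum_col; ring.
have HD : \sum_(i : I) (w i - z i) ^+ 2 = \sum_(i : I) w i ^+ 2
     - 2 * \sum_(i : I) (w i * z i) + \sum_(i : I) z i ^+ 2.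
  rewrite (eq_bigr (fun i => 1 * w i ^+ 2 + (-2) * (w i * z i) + 1 * z i ^+ 2)); last first.
    by move=> i _; ring.
  rewrite lin3; ring.
have D0 : 0 <= \sum_(i : I) (w i - z i) ^+ 2 by apply: sumr_ge0 => i _; exact: sqr_ge0.
rewrite HD in D0.
rewrite Hu HT HTu.
move: D0.
set s := \sum_(i : I) w i.
set A := \sum_(i : I) w i ^+ 2.
set B := \sum_(i : I) (w i * z i).
set Zs := \sum_(i : I) z i ^+ 2.
move=> D0.
have dpos : 0 < n * (1 - q) + q.
  have : 0 < n * (1 - q) by apply: mulr_gt0 => //; rewrite subr_gt0.
  move=> h; lra.
rewrite -subr_ge0.
have -> : (1 - al) * n^-2 * s ^+ 2 + al * n^-1 * A -
  ((1 - al) * n^-2 * (s ^+ 2 + (q ^+ 2 * A - q ^+ 2 * Zs)) +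
   al * n^-1 * ((1 - q) ^+ 2 * A + 2 * q * (1 - q) * B + q ^+ 2 * A))
  = q ^+ 2 * (1 - q) / (n * (n * (1 - q) + q)) * (A - 2 * B + Zs).
  rewrite hal; field.
  by rewrite (gt_eqF dpos) (gt_eqF n0).
apply: mulr_ge0 => //; apply: divr_ge0.
  by apply: mulr_ge0; [exact: sqr_ge0 | rewrite subr_ge0 ltW].
by apply: mulr_ge0; apply: ltW.
Qed.

End Helpers.

Lemma sag_bound (R : realFieldType) (I : finType) (W : I -> I -> R) (q : R)
  (F Phi : (I -> R) -> R) :
  (forall i j, 0 <= W i j) ->
  (forall x, F x <= Phi x) ->
  (forall x, \sum_(j : {ffun I -> I}) choice_prob W j * Phi (sag_step q j x) <= Phi x) ->
  forall t x, sag_expect W q t x F <= Phi x.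
Proof.
move=> hW hF hS; elim=> [|t IH] x /=; first exact: hF.
apply: le_trans (hS x); apply: ler_sum => j _.
by apply: ler_wpM2l; [exact: p_ge0 | exact: IH].
Qed.

Theorem mainTheorem12 (R : realFieldType) (I : finType)
  (q : R) (W : I -> I -> R) (x0 : I -> R)
  (hq0 : 0 < q) (hq1 : q < 1)
  (hWnn : forall i j, 0 <= W i j)
  (hWrow : forall i, \sum_(j : I) W i j = 1)
  (hWcol : forall j, \sum_(i : I) W i j = 1) :
  forall t : nat,
    sag_expect W q t x0 (fun x => (avg x - avg x0) ^+ 2)
    <= q / (#|I|%:R * (1 - q) + q) * var x0.
Proof.
move=> t.
have [N0|Npos] := eqVneq #|I| 0%N.
  have avg0 : forall x : I -> R, avg x = 0 by move=> x; rewrite /avg N0 invr0 mul0r.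
  have -> : var x0 = 0 by rewrite /var N0 invr0 mul0r.
  rewrite mulr0.
  apply: (@sag_bound R I W q _ (fun _ => 0) hWnn).
    by move=> x; rewrite !avg0 subrr expr2 mulr0.
  by move=> x; rewrite big1 // => j _; rewrite mulr0.
set n : R := #|I|%:R.
have hn : forall a : R, \sum_(i : I) a = a * n by move=> a; rewrite sumr_const mulr_natr.
have n0 : 0 < n by rewrite /n ltr0n lt0n.
have nne : n != 0 by rewrite gt_eqF.
set al := q / (n * (1 - q) + q).
set c := avg x0.
have csum : forall x : I -> R, avg x - c = n^-1 * \sum_(i : I) (x i - c).
  move=> x; rewrite sumrB hn /avg -/n; field.
  done.
set Phi := fun x : I -> R => (1 - al) * n^-2 * (\sum_(i : I) (x i - c)) ^+ 2
   + al * n^-1 * \sum_(i : I) (x i - c) ^+ 2.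
have dpos : 0 < n * (1 - q) + q.
  have : 0 < n * (1 - q) by apply: mulr_gt0 => //; rewrite subr_gt0.
  move=> h; lra.
have al0 : 0 <= al by rewrite /al divr_ge0 // ltW.
have -> : q / (n * (1 - q) + q) * var x0 = Phi x0.
  have s0 : \sum_(i : I) (x0 i - c) = 0.
    by apply: (mulfI (invr_neq0 nne)); rewrite -csum subrr mulr0.
  rewrite /Phi s0 [0 ^+ 2]expr2 !mulr0 add0r /var -/n /c mulrA.
  done.
apply: sag_bound => // x.
-
  rewrite /Phi csum.
  set s := \sum_(i : I) (x i - c).
  set A := \sum_(i : I) (x i - c) ^+ 2.
  have hA : 0 <= \sum_(i : I) ((x i - c) - n^-1 * s) ^+ 2
    by apply: sumr_ge0 => i _; exact: sqr_ge0.
  rewrite (eq_bigr (fun i => 1 * (x i - c) ^+ 2 + (- 2 * n^-1 * s) * (x i - c)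
       + (n^-1 * s) ^+ 2 * 1)) in hA; last by move=> i _; ring.
  rewrite lin3 -/A -/s hn in hA.
  have e : 1 * A + - 2 * n^-1 * s * s + (n^-1 * s) ^+ 2 * (1 * n)
     = A - n^-1 * s ^+ 2 by field.
  rewrite e in hA.
  have hB : (n^-1 * s) ^+ 2 <= n^-1 * A.
    have e2 : n^-1 * A - (n^-1 * s) ^+ 2 = n^-1 * (A - n^-1 * s ^+ 2) by field.
    by rewrite -subr_ge0 e2 mulr_ge0 // invr_ge0 ltW.
  have e3 : (1 - al) * n^-2 * s ^+ 2 = (1 - al) * (n^-1 * s) ^+ 2.
    by rewrite exprMn expr2 exprVn; ring.
  rewrite e3.
  move: hB; set a := (n^-1 * s) ^+ 2; set b := n^-1 * A => hB.
  rewrite -mulrA -subr_ge0.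
  have -> : (1 - al) * a + al * b - a = al * (b - a) by ring.
  by rewrite mulr_ge0 // subr_ge0.
-
  set w := fun i => x i - c.
  have hstep : forall j i, sag_step q j x i - c = (1 - q) * w i + q * w (j i).
    by move=> j i; rewrite /sag_step /w; ring.
  apply: le_trans (@step_main R I W hWrow hWcol q w n al n0 hq0 hq1 (erefl al)).
  rewrite le_eqVlt; apply/orP; left; apply/eqP.
  rewrite /Phi; under eq_bigr do rewrite mulrDr.
  rewrite big_split /=.
  rewrite [X in X + _ = _](eq_bigr (fun j => (1 - al) * n^-2 *
      (choice_prob W j * (\sum_(i : I) ((1 - q) * w i + q * w (j i))) ^+ 2))); last first.
    move=> j _; under eq_bigr do rewrite hstep; ring.
  rewrite [X in _ + X = _](eq_bigr (fun j => al * n^-1 *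
      (choice_prob W j * \sum_(i : I) ((1 - q) * w i + q * w (j i)) ^+ 2))); last first.
    move=> j _; under eq_bigr do rewrite hstep; ring.
  by rewrite -!mulr_sumr.
Qed.
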